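(* Let $\mathcal{X}$, $\mathcal{Y}$ be finite sets, $\mathcal{H}_S$ a finite-dimensional Hilbert space, and $\{\mathcal{N}^{y|x}\}_{x\in\mathcal{X},y\in\mathcal{Y}}$ an indecomposable CC-QSC acting on $\mathcal{H}_S$. Let $Q$ be a probability mass function on $\mathcal{X}$. For an initial density operator $\rho_{S_0}\in\mathfrak{D}(\mathcal{H}_S)$ and $n\ge1$, let $(X_1^n,Y_1^n)$ be random sequences on $\mathcal{X}^n\times\mathcal{Y}^n$ with joint pmf \[ P(\mathbf{x}_1^n,\mathbf{y}_1^n)=\prod_{\ell=1}^n Q(x_\ell)\cdot\operatorname{tr}\big(\mathcal{N}^{y_n|x_n}\circ\cdots\circ\mathcal{N}^{y_1|x_1}(\rho_{S_0})\big), \] and define $\mathrm{I}^{(n)}(Q,\{\mathcal{N}^{y|x}\},\rho_{S_0})\triangleq\frac1n \mathbf{I}(X_1^n;Y_1^n)$, the (classical) mutual information under this joint pmf, divided by $n$. Then for any $\alpha_{S_0},\beta_{S_0}\in\mathfrak{D}(\mathcal{H}_S)$, \[ \mathrm{I}^{(n)}(Q,\{\mathcal{N}^{y|x}\},\alpha_{S_0})-\mathrm{I}^{(n)}(Q,\{\mathcal{N}^{y|x}\},\beta_{S_0})\xrightarrow{n\to\infty}0 . \]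
   Context: $\mathfrak{D}(\mathcal{H})$ denotes the set of density operators on $\mathcal{H}$. A (classical-input classical-output) quantum-state channel (CC-QSC) is a finitely indexed family $\{\mathcal{N}^{y|x}\}_{x\in\mathcal{X},y\in\mathcal{Y}}$ of completely positive maps, all acting on operators on the same Hilbert space $\mathcal{H}_S$, such that $\sum_{y\in\mathcal{Y}}\mathcal{N}^{y|x}$ is trace-preserving for each $x\in\mathcal{X}$. A CC-QSC is called indecomposable if for any initial density operators $\alpha_{S_0},\beta_{S_0}$ and any $\varepsilon>0$ there exists a positive integer $N$ such that $\|\alpha_{S_n}^{(\mathbf{x}_1^n)}-\beta_{S_n}^{(\mathbf{x}_1^n)}\|_1<\varepsilon$ for all $n\ge N$ and all $\mathbf{x}_1^n\in\mathcal{X}^n$, where $\alpha_{S_n}^{(\mathbf{x}_1^n)}\triangleq\sum_{\mathbf{y}_1^n\in\mathcal{Y}^n}\mathcal{N}^{y_n|x_n}\circ\cdots\circ\mathcal{N}^{y_1|x_1}(\alpha_{S_0})$, similarly for $\beta$, and $\|A\|_1\triangleq\frac12\operatorname{tr}\sqrt{A^\dagger A}$ is the trace distance. *)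

(* Defs.v *)
From HB Require Import structures.
From mathcomp Require Import all_boot all_order all_algebra.
From mathcomp Require Import complex.
From mathcomp Require Import boolp classical_sets reals exp topology normedtype sequences.

Set Implicit Arguments.
Unset Strict Implicit.
Unset Printing Implicit Defensive.

Import Order.TTheory GRing.Theory Num.Theory numFieldNormedType.Exports.
Local Open Scope ring_scope.
Local Open Scope sesquilinear_scope.

Section QuantumDefs.
Variable R : realType.
Local Notation C := (R[i]).

(* positive semidefinite matrix: v^dagger A v >= 0 for every vector v
   (in the order of the complex numbers, 0 <= z means z is real and >= 0) *)
Definition psdmx m (A : 'M[C]_m) : Prop :=
  forall v : 'cV[C]_m, 0 <= (v ^t* *m A *m v) 0 0.

Definition density d (rho : 'M[C]_d) : Prop := psdmx rho /\ \tr rho = 1.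

Definition mxsqrt d (P : 'M[C]_d) : 'M[C]_d :=
  xget 0 [set Q : 'M[C]_d | psdmx Q /\ Q *m Q = P].

Definition trace_dist d (A : 'M[C]_d) : R :=
  complex.Re (\tr (mxsqrt (A ^t* *m A))) / 2.

(* complete positivity: for every k, id_k (x) N maps psd (k*d)x(k*d) block
   matrices to psd block matrices *)
Definition completely_positive d (N : 'M[C]_d -> 'M[C]_d) : Prop :=
  linear N /\
  forall (k : nat) (B : 'I_k -> 'I_k -> 'M[C]_d),
    psdmx (\mxblock_(i < k, j < k) B i j) ->
    psdmx (\mxblock_(i < k, j < k) N (B i j)).

Definition trace_preserving d (T : 'M[C]_d -> 'M[C]_d) : Prop :=
  forall A, \tr (T A) = \tr A.

(* a CC-QSC {N^{y|x}} ; N x y stands for N^{y|x} *)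
Definition ccqsc (X Y : finType) d (N : X -> Y -> 'M[C]_d -> 'M[C]_d) : Prop :=
  (forall x y, completely_positive (N x y)) /\
  (forall x, trace_preserving (fun A => \sum_(y : Y) N x y A)).

Definition evolve (X Y : finType) d (N : X -> Y -> 'M[C]_d -> 'M[C]_d)
  n (xs : n.-tuple X) (ys : n.-tuple Y) (rho : 'M[C]_d) : 'M[C]_d :=
  foldl (fun A (p : X * Y) => N p.1 p.2 A) rho (zip xs ys).

Definition state_n (X Y : finType) d (N : X -> Y -> 'M[C]_d -> 'M[C]_d)
  n (xs : n.-tuple X) (rho : 'M[C]_d) : 'M[C]_d :=
  \sum_(ys : n.-tuple Y) evolve N xs ys rho.

Definition indecomposable (X Y : finType) d
  (N : X -> Y -> 'M[C]_d -> 'M[C]_d) : Prop :=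
  forall alpha beta : 'M[C]_d, density alpha -> density beta ->
  forall eps : R, 0 < eps -> exists N0 : nat, forall n : nat, (N0 <= n)%N ->
  forall xs : n.-tuple X,
    trace_dist (state_n N xs alpha - state_n N xs beta) < eps.

Definition pmf (X : finType) (Q : X -> R) : Prop :=
  (forall x, 0 <= Q x) /\ \sum_(x : X) Q x = 1.

Definition mutual_info (A B : finType) (P : A -> B -> R) : R :=
  \sum_(a : A) \sum_(b : B)
    (if P a b == 0 then 0
     else P a b * ln (P a b / ((\sum_(b' : B) P a b') * (\sum_(a' : A) P a' b)))).

Definition joint_pmf (X Y : finType) d (N : X -> Y -> 'M[C]_d -> 'M[C]_d)
  (Q : X -> R) (rho : 'M[C]_d) n (xs : n.-tuple X) (ys : n.-tuple Y) : R :=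
  (\prod_(l < n) Q (tnth xs l)) * complex.Re (\tr (evolve N xs ys rho)).

Definition In (X Y : finType) d (N : X -> Y -> 'M[C]_d -> 'M[C]_d)
  (Q : X -> R) (rho : 'M[C]_d) (n : nat) : R :=
  n%:R^-1 * mutual_info (@joint_pmf X Y d N Q rho n).

End QuantumDefs.

(* Main.v *)
Require Import Defs.
From HB Require Import structures.
From mathcomp Require Import all_boot all_order all_algebra.
From mathcomp Require Import complex.
From mathcomp Require Import boolp classical_sets reals exp topology normedtype sequences.
From mathcomp Require Import ring lra.
Import Order.TTheory GRing.Theory Num.Theory numFieldNormedType.Exports.
Local Open Scope ring_scope.
Local Open Scope classical_set_scope.

Section Part0.
Set Implicit Arguments.
Unset Strict Implicit.
Unset Printing Implicit Defensive.
Local Open Scope ring_scope.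

Section Phi.
Variable R : realType.
Definition phi (x : R) : R := x * ln x.

Lemma ln_le_sub1 {x : R} : 0 < x -> ln x <= x - 1.
Proof.
move=> x0; have := @le_ln1Dx R (x - 1).
by rewrite addrCA subrr addr0; apply; lra.
Qed.

Lemma ln_ge_1subV {x : R} : 0 < x -> 1 - x^-1 <= ln x.
Proof.
move=> x0; have h := @ln_le_sub1 x^-1; rewrite invr_gt0 in h; have {}h := h x0.
rewrite lnV ?posrE // in h; lra.
Qed.

Lemma phi_ge {x : R} : 0 <= x -> x - 1 <= phi x.
Proof.
rewrite le0r => /orP[/eqP->|x0]; first by rewrite /phi mul0r; lra.
have := ln_ge_1subV x0; rewrite /phi => h.
have : x * (1 - x^-1) <= x * ln x by rewrite ler_pM2l.
by rewrite mulrBr mulr1 mulfV ?gt_eqF.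
Qed.

Lemma phi_ge_m1 {x : R} : 0 <= x -> x <= 1 -> -1 <= phi x.
Proof. move=> h0 h1; have := phi_ge h0; lra. Qed.

Lemma phi_le0 {x : R} : 0 <= x -> x <= 1 -> phi x <= 0.
Proof. by move=> h0 h1; rewrite /phi mulr_ge0_le0 // ln_le0. Qed.

Lemma phi_le_mono {a b : R} : 0 <= a -> a <= b -> phi a <= a * ln b.
Proof.
rewrite le0r => /orP[/eqP->|a0] ab; first by rewrite /phi !mul0r.
rewrite /phi ler_pM2l // ler_ln ?posrE //; lra.
Qed.

Lemma phi_superadd {a b : R} : 0 <= a -> 0 <= b -> phi a + phi b <= phi (a + b).
Proof.
move=> a0 b0; rewrite /phi mulrDl lerD // ?phi_le_mono //; lra.
Qed.

Lemma phi_pert {c b : R} : 0 <= c -> 0 <= b -> c + b <= 1 -> phi (c + b) <= phi c + b.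
Proof.
move=> c0 b0 cb1; rewrite /phi mulrDl.
have h1 : b * ln (c + b) <= 0 by rewrite mulr_ge0_le0 // ln_le0.
suff : c * ln (c + b) <= c * ln c + b by lra.
move: c0; rewrite le0r => /orP[/eqP->|c0]; first by rewrite !mul0r add0r.
have bc : 0 <= b / c by rewrite divr_ge0 // ltW.
have -> : c + b = c * (1 + b / c) by rewrite mulrDr mulr1 mulrCA mulfV ?gt_eqF // mulr1.
rewrite lnM ?posrE //; last by lra.
rewrite mulrDr lerD2l.
have h := @le_ln1Dx R (b / c) (_ : -1 < b / c); have {}h := h ltac:(lra).
have : c * ln (1 + b / c) <= c * (b / c) by rewrite ler_pM2l.
by rewrite mulrCA mulfV ?gt_eqF // mulr1.
Qed.

Lemma phi_scale {c x : R} : 0 < c -> 0 < x -> phi (c * x) = c * phi x + x * phi c.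
Proof. move=> c0 x0; rewrite /phi lnM ?posrE //; ring. Qed.

Section Sums.
Variable I : finType.

Lemma phi_sum_le (a : I -> R) : (forall i, 0 <= a i) ->
  \sum_i phi (a i) <= phi (\sum_i a i).
Proof.
move=> a0; rewrite /phi mulr_suml; apply: ler_sum => i _.
apply: phi_le_mono => //; rewrite (bigD1 i) //= lerDl sumr_ge0 //.
Qed.

Lemma phi_sum_ge (a : I -> R) : (forall i, 0 <= a i) -> (0 < #|I|)%N ->
  phi (\sum_i a i) - (\sum_i a i) * ln #|I|%:R <= \sum_i phi (a i).
Proof.
move=> a0 I0; set S := \sum_i a i.
have S0 : 0 <= S by rewrite sumr_ge0.
move: S0; rewrite le0r => /orP[/eqP S0|S0].
  rewrite S0 /phi !mul0r subr0; apply: sumr_ge0 => i _.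
  have : a i = 0.
    apply/eqP; move: S0; rewrite /S => /eqP; rewrite psumr_eq0 //.
    by move=> /allP /(_ i); rewrite mem_index_enum => /(_ isT).
  by move=> ->; rewrite mul0r.
have K0 : 0 < #|I|%:R :> R by rewrite ltr0n.
have key : forall i, a i - S / #|I|%:R <= a i * (ln (a i) - (ln S - ln #|I|%:R)).
  move=> i; move: (a0 i); rewrite le0r => /orP[/eqP->|ai0].
    by rewrite mul0r sub0r oppr_le0 divr_ge0 // ltW.
  have p : 0 < #|I|%:R * a i / S by rewrite divr_gt0 // mulr_gt0.
  have := ln_ge_1subV p.
  rewrite ln_div ?posrE ?mulr_gt0 // lnM ?posrE // => h.
  have h' : 1 - (#|I|%:R * a i / S)^-1 <= ln (a i) - (ln S - ln #|I|%:R) by lra.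
  have : a i * (1 - (#|I|%:R * a i / S)^-1) <= a i * (ln (a i) - (ln S - ln #|I|%:R)).
    by rewrite ler_pM2l.
  apply: le_trans; rewrite le_eqVlt; apply/orP; left; apply/eqP.
  field; rewrite !gt_eqF //.
have : \sum_i (a i - S / #|I|%:R) <= \sum_i a i * (ln (a i) - (ln S - ln #|I|%:R)) by apply: ler_sum => i _; exact: key.
 rewrite sumrB -mulr_suml -/S.
rewrite sumr_const.
rewrite (_ : #|_| = #|I|) //.
have -> : S *+ #|I| / #|I|%:R = S.
  by rewrite -[S *+ _]mulr_natr -mulrA divff ?mulr1 // gt_eqF.
rewrite subrr.
under eq_bigr => i _ do rewrite mulrBr.
rewrite sumrB -mulr_suml -/S /phi => h.
under eq_bigr => i _ do rewrite /phi.
lra.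
Qed.

Lemma le_sum_one (p : I -> R) i : (forall i, 0 <= p i) -> \sum_j p j = 1 -> p i <= 1.
Proof.
move=> p0 <-; rewrite (bigD1 i) //= lerDl sumr_ge0 //.
Qed.

Lemma phi_cont (p p' : I -> R) (eps : R) :
  (forall i, 0 <= p i) -> (forall i, 0 <= p' i) ->
  \sum_i p i = 1 -> \sum_i p' i = 1 -> (0 < #|I|)%N ->
  \sum_i `|p i - p' i| <= eps *+ 2 ->
  \sum_i phi (p' i) - \sum_i phi (p i) <= 2 + eps * ln #|I|%:R.
Proof.
move=> p0 p'0 s1 s1' I0 heps.
pose c i := if p i <= p' i then p i else p' i.
have c0 i : 0 <= c i by rewrite /c; case: ifP.
have b0 i : 0 <= p i - c i by rewrite /c; case: ifP => h; lra.
have b'0 i : 0 <= p' i - c i by rewrite /c; case: ifP => h //; rewrite subr_ge0 // ltW // ltNge h.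
have habs i : `|p i - p' i| = (p i - c i) + (p' i - c i).
  rewrite /c; case: ifP => h.
    by rewrite ler0_norm ?subr_le0 //; ring.
  by rewrite ger0_norm ?subr_ge0 ?ltW // ?ltNge ?h //; ring.
set d := \sum_i (p i - c i).
have dd : \sum_i (p' i - c i) = d by rewrite /d !sumrB s1 s1'.
have d0 : 0 <= d by rewrite sumr_ge0.
have d1 : d <= 1.
  rewrite /d sumrB s1; have : 0 <= \sum_i c i by rewrite sumr_ge0.
  lra.
have deps : d <= eps.
  have : \sum_i `|p i - p' i| = d *+ 2.
    by under eq_bigr => i _ do rewrite habs; rewrite big_split /= dd mulr2n.
  move=> e; rewrite e in heps; move: heps; rewrite !mulr2n; lra.
have h1 : \sum_i phi (c i) + \sum_i phi (p i - c i) <= \sum_i phi (p i).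
  rewrite -big_split /=; apply: ler_sum => i _.
  have := phi_superadd (c0 i) (b0 i); by rewrite addrCA subrr addr0.
have h2 : phi d - d * ln #|I|%:R <= \sum_i phi (p i - c i) by apply: phi_sum_ge.
have h3 : \sum_i phi (p' i) <= \sum_i phi (c i) + d.
  rewrite -dd -big_split /=; apply: ler_sum => i _.
  have := @phi_pert (c i) (p' i - c i) (c0 i) (b'0 i).
  rewrite addrCA subrr addr0; apply; exact: le_sum_one.
have h4 : -1 <= phi d by apply: phi_ge_m1.
have lK : 0 <= ln (#|I|%:R : R) by rewrite ln_ge0 // ler1n.
have h5 : d * ln #|I|%:R <= eps * ln #|I|%:R by rewrite ler_wpM2r.
lra.
Qed.
End Sums.
End Phi.

End Part0.

Section Part1.
Set Implicit Arguments.
Unset Strict Implicit.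
Unset Printing Implicit Defensive.
Local Open Scope ring_scope.
Local Open Scope sesquilinear_scope.

Section Q.
Variable R : realType.
Local Notation C := R[i].

Definition qf d (A : 'M[C]_d) (u v : 'cV[C]_d) := (u ^t* *m A *m v) 0 0.

Lemma qf_delta d (A : 'M[C]_d) i j : qf A (delta_mx i 0) (delta_mx j 0) = A i j.
Proof.
rewrite /qf.
have -> : (delta_mx i 0 : 'cV[C]_d) ^t* = delta_mx 0 i.
  apply/matrixP => a b; rewrite !mxE.
  by case: (_ == _); case: (_ == _); rewrite /= ?conjC1 ?conjC0.
by rewrite -rowE -colE !mxE.
Qed.

Lemma qf_expand d (A : 'M[C]_d) u v (c : C) :
  qf A (u + c *: v) (u + c *: v) =
  qf A u u + c * qf A u v + c^* * qf A v u + c^* * c * qf A v v.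
Proof.
rewrite /qf.
have -> : (u + c *: v)^t* = u^t* + c^* *: v^t*.
  by apply/matrixP => a b; rewrite !mxE rmorphD rmorphM.
rewrite !mulmxDl !mulmxDr -!scalemxAl -!scalemxAr !mxE.
ring.
Qed.


Lemma ge0_conj (z : C) : 0 <= z -> z^* = z.
Proof. by move=> h; apply: conj_Creal; exact: ger0_real. Qed.

Lemma conj_aux (x y : C) : (x + y)^* = x + y -> ('i * (x - y))^* = 'i * (x - y) -> y^* = x.
Proof.
move=> e1 e2.
have e3 : (x - y)^* = - (x - y).
  move: e2; rewrite rmorphM /= conjCi => e2.
  apply: (@mulfI _ 'i); first exact: neq0Ci.
  by rewrite mulrN -e2 mulNr opprK.
have : 2%:R * y^* = 2%:R * x.
  have -> : 2%:R * y^* = (x + y)^* - (x - y)^* by rewrite !rmorphD rmorphN /=; ring.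
  by rewrite e1 e3; ring.
by move/mulfI; apply; rewrite pnatr_eq0.
Qed.

Lemma psd_herm d (A : 'M[C]_d) : psdmx A -> A ^t* = A.
Proof.
move=> hA; apply/matrixP => i j; rewrite !mxE.
have r v : (qf A v v)^* = qf A v v by apply: ge0_conj; exact: hA.
have hii k : (A k k)^* = A k k by rewrite -qf_delta r.
apply: conj_aux.
- have := r (delta_mx i 0 + 1 *: delta_mx j 0).
  rewrite qf_expand !qf_delta conjC1 !mul1r !rmorphD /= !hii => E.
  apply/eqP; rewrite -subr_eq0; apply/eqP.
  transitivity ((A i i + (A i j)^* + (A j i)^* + A j j) - (A i i + A i j + A j i + A j j)).
    by ring.
  by rewrite E subrr.
- have := r (delta_mx i 0 + 'i *: delta_mx j 0).
  rewrite qf_expand !qf_delta conjCi !rmorphD !rmorphM !rmorphN /= !hii !conjCi !opprK => E.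
  apply/eqP; rewrite -subr_eq0; apply/eqP.
  rewrite rmorphB /=.
  transitivity ((A i i + - 'i * (A i j)^* + 'i * (A j i)^* + 'i * - 'i * A j j) -
                (A i i + 'i * A i j + - 'i * A j i + - 'i * 'i * A j j)).
    by ring.
  by rewrite E subrr.
Qed.

Lemma psd_tr d (A : 'M[C]_d) : psdmx A -> 0 <= \tr A.
Proof.
move=> hA; rewrite /mxtrace; apply: sumr_ge0 => i _.
rewrite -qf_delta; exact: hA.
Qed.


Section Mof.
Variables (d : nat) (U : 'M[C]_d).
Hypothesis hU1 : U *m U^t* = 1%:M.
Hypothesis hU2 : U^t* *m U = 1%:M.

Definition Mof (w : 'rV[C]_d) := U^t* *m diag_mx w *m U.

Lemma MofB (w1 w2 : 'rV[C]_d) : Mof (w1 - w2) = Mof w1 - Mof w2.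
Proof. by rewrite /Mof linearB /= mulmxBr mulmxBl. Qed.

Lemma MofM (w1 w2 : 'rV[C]_d) : Mof w1 *m Mof w2 = Mof (\row_j (w1 0 j * w2 0 j)).
Proof.
rewrite /Mof !mulmxA -[_ *m U *m U^t*]mulmxA hU1 mulmx1.
by rewrite -[_ *m diag_mx w1 *m diag_mx w2]mulmxA mulmx_diag.
Qed.

Lemma Mof_tr (w : 'rV[C]_d) : \tr (Mof w) = \sum_j w 0 j.
Proof.
by rewrite /Mof mxtrace_mulC mulmxA hU1 mul1mx mxtrace_diag.
Qed.

Lemma Mof_psd (w : 'rV[C]_d) : (forall j, 0 <= w 0 j) -> psdmx (Mof w).
Proof.
move=> w0 v; rewrite /Mof.
have -> : v^t* *m (U^t* *m diag_mx w *m U) *m v = (U *m v)^t* *m diag_mx w *m (U *m v).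
  have -> : (U *m v)^t* = v^t* *m U^t* by rewrite trmx_mul map_mxM.
  by rewrite !mulmxA.
rewrite mul_mx_diag !mxE; apply: sumr_ge0 => k _; rewrite !mxE.
rewrite mulrC mulrA; apply: mulr_ge0; last exact: w0.
exact: mul_conjC_ge0.
Qed.

Lemma Mof_qf (w : 'rV[C]_d) i : qf (Mof w) (U^t* *m delta_mx i 0) (U^t* *m delta_mx i 0) = w 0 i.
Proof.
rewrite /qf /Mof.
have -> : (U^t* *m delta_mx i 0)^t* = (delta_mx i 0 : 'cV[C]_d)^t* *m U.
  by rewrite trmx_mul map_mxM trmxCK.
have -> : (delta_mx i 0 : 'cV[C]_d)^t* *m U *m (U^t* *m diag_mx w *m U) *m (U^t* *m (delta_mx i 0 : 'cV[C]_d))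
   = (delta_mx i 0 : 'cV[C]_d)^t* *m diag_mx w *m (delta_mx i 0 : 'cV[C]_d).
  by rewrite !mulmxA -[_ *m U *m U^t*]mulmxA hU1 mulmx1 -[_ *m U *m U^t*]mulmxA hU1 mulmx1.
by have := qf_delta (diag_mx w) i i; rewrite /qf => ->; rewrite mxE eqxx mulr1n.
Qed.

Lemma char_poly_Mof (w : 'rV[C]_d) : char_poly (Mof w) = \prod_i ('X - (w 0 i)%:P).
Proof.
rewrite /char_poly /char_poly_mx /Mof !map_mxM.
set U1 := (U^t*) ^ polyC; set U2 := U ^ polyC.
have h12 : U1 *m U2 = 1%:M by rewrite /U1 /U2 -map_mxM hU2 map_mx1.
have -> : 'X%:M = U1 *m 'X%:M *m U2 :> 'M[{poly C}]_d.
  by rewrite mul_mx_scalar -scalemxAl h12 scalemx1.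
rewrite -mulmxBl -mulmxBr !det_mulmx mulrC mulrA -det_mulmx.
have -> : U2 *m U1 = 1%:M.
  rewrite /U1 /U2 -map_mxM hU1 map_mx1 //.
rewrite det1 mul1r.
have := char_poly_trig (diag_mx_is_trig w); rewrite /char_poly /char_poly_mx => ->.
by apply: eq_bigr => i _; rewrite mxE eqxx mulr1n.
Qed.
End Mof.

Lemma herm_spec d (D : 'M[C]_d) : D^t* = D ->
  exists U s, [/\ U *m U^t* = 1%:M, U^t* *m U = 1%:M, D = Mof U s &
                 forall i, s 0 i \is Num.real].
Proof.
move=> hD.
have hh : D \is hermsymmx by rewrite is_hermitianmxE expr0 scale1r hD.
exists (spectralmx D), (spectral_diag D).
have Uu := spectral_unitarymx D.
have hU1 : spectralmx D *m (spectralmx D)^t* = 1%:M by apply/unitarymxP.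
split => //.
- by rewrite -invmx_unitary // mulVmx // spectral_unit.
- by rewrite /Mof -invmx_unitary //; apply/orthomx_spectralP/hermitian_normalmx.
- move=> i; have /mxOverP := hermitian_spectral_diag_real hh; exact.
Qed.

Lemma Re_add (x y : C) : complex.Re (x + y) = complex.Re x + complex.Re y.
Proof. by case: x; case: y. Qed.

Lemma tr_sqrt d (U : 'M[C]_d) (s : 'rV[C]_d) (S : 'M[C]_d) :
  U *m U^t* = 1%:M -> U^t* *m U = 1%:M -> (forall i, s 0 i \is Num.real) ->
  psdmx S -> S *m S = Mof U s *m Mof U s -> \tr S = \sum_i `|s 0 i|.
Proof.
move=> hU1 hU2 rs hS hSS.
have [V [e [hV1 hV2 ES _]]] := herm_spec (psd_herm hS).
have e0 i : 0 <= e 0 i by rewrite -(Mof_qf hV1) -ES; exact: hS.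
have cp : \prod_i ('X - (e 0 i ^+ 2)%:P) = \prod_i ('X - (s 0 i ^+ 2)%:P).
  have := congr1 char_poly hSS.
  rewrite {1 2}ES (MofM hV1) (MofM hU1) (char_poly_Mof hV1 hV2) (char_poly_Mof hU1 hU2).
  by under eq_bigr => i _ do rewrite mxE -expr2; under [RHS]eq_bigr => i _ do rewrite mxE -expr2.
have pe : perm_eq [seq e 0 i ^+ 2 | i <- index_enum 'I_d] [seq s 0 i ^+ 2 | i <- index_enum 'I_d].
  by apply: prod_XsubC_eq; rewrite !big_map.
rewrite ES Mof_tr //.
transitivity (\sum_(x <- [seq e 0 i ^+ 2 | i <- index_enum 'I_d]) sqrtC x).
  by rewrite big_map; apply: eq_bigr => i _; rewrite sqrCK.
rewrite (perm_big _ pe) big_map; apply: eq_bigr => i _.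
by rewrite -real_normK // sqrCK.
Qed.

Lemma trace_decomp d (D : 'M[C]_d) : D^t* = D ->
  exists P M : 'M[C]_d, [/\ psdmx P, psdmx M, D = P - M &
     complex.Re (\tr P) + complex.Re (\tr M) = 2 * trace_dist D].
Proof.
move=> hD; have [U [s [hU1 hU2 ED rs]]] := herm_spec hD.
set S := mxsqrt (D^t* *m D).
have hS : psdmx S /\ S *m S = D^t* *m D.
  apply: (@xgetPex _ 0 [set Q : 'M[C]_d | psdmx Q /\ Q *m Q = D^t* *m D]).
  exists (Mof U (\row_i `|s 0 i|)); split.
    by apply: Mof_psd => // i; rewrite mxE normr_ge0.
  rewrite hD ED !MofM //; congr Mof; apply/rowP => i; rewrite !mxE.
  by rewrite -!expr2 real_normK.
have trS : \tr S = \sum_i `|s 0 i|.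
  by apply: (tr_sqrt hU1 hU2 rs hS.1); rewrite hS.2 hD ED.
exists (Mof U (\row_i ((`|s 0 i| + s 0 i) / 2%:R))), (Mof U (\row_i ((`|s 0 i| - s 0 i) / 2%:R))).
have two : (2%:R : C) != 0 by rewrite pnatr_eq0.
split.
- apply: Mof_psd => // i; rewrite mxE divr_ge0 ?ler0n // addrC -lerBlDr sub0r.
  by rewrite lerNl -normrN; apply: real_ler_norm; rewrite realN.
- apply: Mof_psd => // i; rewrite mxE divr_ge0 ?ler0n // subr_ge0.
  exact: real_ler_norm.
- rewrite -MofB ED; congr Mof; apply/rowP => i; rewrite !mxE.
  by field.
- rewrite -Re_add !Mof_tr // -big_split /=.
  rewrite /trace_dist -/S trS.
  have -> : \sum_i ((\row_i0 ((`|s 0 i0| + s 0 i0) / 2%:R)) 0 i +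
           (\row_i0 ((`|s 0 i0| - s 0 i0) / 2%:R)) 0 i) = \sum_i `|s 0 i|.
    by apply: eq_bigr => i _; rewrite !mxE; field.
  by rewrite mulrC divfK // pnatr_eq0.
Qed.
End Q.

End Part1.

Section Part2.
Set Implicit Arguments.
Unset Strict Implicit.
Unset Printing Implicit Defensive.
Local Open Scope ring_scope.
Local Open Scope sesquilinear_scope.

Lemma psd_cast (R : realType) m n (e : m = n) (M : 'M[R[i]]_m) :
  psdmx (castmx (e, e) M) <-> psdmx M.
Proof. by case: n / e; rewrite castmx_id. Qed.

Section TupleSum.
Variables (V : nmodType) (T : finType).

Lemma sum_tuple_cat k m (F : (k + m).-tuple T -> V) :
  \sum_(t : (k + m).-tuple T) F t =
  \sum_(u : k.-tuple T) \sum_(v : m.-tuple T) F [tuple of u ++ v].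
Proof.
rewrite pair_big /=.
have e1 : minn k (k + m) = k by apply/minn_idPl; rewrite leq_addr.
have e2 : (k + m - k = m)%N by rewrite addKn.
pose g (t : (k + m).-tuple T) := (tcast e1 [tuple of take k t], tcast e2 [tuple of drop k t]).
pose h (p : k.-tuple T * m.-tuple T) := [tuple of p.1 ++ p.2].
rewrite (reindex h) //.
exists g.
  move=> [u v] _; rewrite /g /h /=; congr pair; apply: val_inj; rewrite [val _]val_tcast /=.
    by rewrite take_size_cat ?size_tuple.
  by rewrite drop_size_cat ?size_tuple.
move=> t _; apply: val_inj; rewrite /g /h /= !val_tcast /=.
by rewrite cat_take_drop.
Qed.

Lemma sum_tuple1 (F : 1.-tuple T -> V) :
  \sum_(t : 1.-tuple T) F t = \sum_(x : T) F [tuple x].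
Proof.
rewrite (reindex (fun x : T => [tuple x])) //.
exists (fun t => thead t) => [x _|t _] //.
by rewrite [t]tuple_eta theadE; congr [tuple of _ :: _]; apply: val_inj; case: t => [[|? []]].
Qed.

Lemma sum_tuple0 (F : 0.-tuple T -> V) :
  \sum_(t : 0.-tuple T) F t = F [tuple].
Proof.
rewrite (big_pred1 [tuple]) // => t; rewrite /= tuple0; apply/esym/eqP; exact: tuple0.
Qed.
End TupleSum.

Section Evol.
Variables (R : realType) (X Y : finType) (d : nat).
Local Notation C := R[i].
Variable N : X -> Y -> 'M[C]_d -> 'M[C]_d.
Hypothesis hN : ccqsc N.

Lemma N_D x y A B : N x y (A + B) = N x y A + N x y B.
Proof. by have := (hN.1 x y).1 1 A B; rewrite !scale1r => ->. Qed.

Lemma N_0 x y : N x y 0 = 0.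
Proof.
have h := N_D x y 0 0; rewrite addr0 in h.
by apply: (@addrI _ (N x y 0)); rewrite addr0 -h.
Qed.

Lemma N_N x y A : N x y (- A) = - N x y A.
Proof.
by have := (hN.1 x y).1 (-1) A 0; rewrite addr0 N_0 addr0 !scaleN1r => ->.
Qed.

Lemma N_B x y A B : N x y (A - B) = N x y A - N x y B.
Proof. by rewrite N_D N_N. Qed.

Lemma N_psd x y A : psdmx A -> psdmx (N x y A).
Proof.
move=> hA.
have h1 : psdmx (\mxblock_(i < 1, j < 1) A).
  by move: hA; rewrite {1}(mxEmxblock A) => /psd_cast.
have := (hN.1 x y).2 1 (fun _ _ => A) h1.
by rewrite {2}(mxEmxblock (N x y A)) => /psd_cast.
Qed.

Definition evol (l : seq (X * Y)) (A : 'M[C]_d) :=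
  foldl (fun A (p : X * Y) => N p.1 p.2 A) A l.

Lemma evolveE n (xs : n.-tuple X) (ys : n.-tuple Y) A :
  evolve N xs ys A = evol (zip xs ys) A.
Proof. by []. Qed.

Lemma evol_D l A B : evol l (A + B) = evol l A + evol l B.
Proof. by elim: l A B => [|p l IH] A B //=; rewrite N_D IH. Qed.

Lemma evol_0 l : evol l 0 = 0.
Proof. by elim: l => [|p l IH] //=; rewrite N_0 IH. Qed.

Lemma evol_B l A B : evol l (A - B) = evol l A - evol l B.
Proof. by elim: l A B => [|p l IH] A B //=; rewrite N_B IH. Qed.

Lemma evol_sum l (I : finType) (F : I -> 'M[C]_d) :
  evol l (\sum_i F i) = \sum_i evol l (F i).
Proof. by apply: big_morph; [exact: evol_D | exact: evol_0]. Qed.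

Lemma evol_psd l A : psdmx A -> psdmx (evol l A).
Proof.
elim: l A => [|p l IH] A hA; first exact: hA.
exact: (IH _ (N_psd p.1 p.2 hA)).
Qed.

Lemma evolve_cat k m (u : k.-tuple X) (v : m.-tuple X) (s : k.-tuple Y) (t : m.-tuple Y) A :
  evolve N [tuple of u ++ v] [tuple of s ++ t] A = evolve N v t (evolve N u s A).
Proof. by rewrite !evolveE /= zip_cat ?size_tuple // /evol foldl_cat. Qed.

Lemma state_cat k m (u : k.-tuple X) (v : m.-tuple X) A :
  state_n N [tuple of u ++ v] A = state_n N v (state_n N u A).
Proof.
rewrite /state_n sum_tuple_cat exchange_big /=; apply: eq_bigr => t _.
rewrite evolveE evol_sum; apply: eq_bigr => s _.
by rewrite evolve_cat.
Qed.

Lemma state_psd n (xs : n.-tuple X) A : psdmx A -> psdmx (state_n N xs A).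
Proof.
move=> hA; rewrite /state_n.
apply: (@big_ind _ (@psdmx R d)).
- move=> v; rewrite mulmx0 mul0mx mxE.  exact: lexx.
- move=> B1 B2 h1 h2 v; rewrite mulmxDr mulmxDl mxE; exact: addr_ge0.
- by move=> ys _; apply: evol_psd.
Qed.

Lemma state_B n (xs : n.-tuple X) A B : state_n N xs (A - B) = state_n N xs A - state_n N xs B.
Proof. by rewrite /state_n -sumrB; apply: eq_bigr => ys _; rewrite evolveE evol_B. Qed.

Lemma state_tr n (xs : n.-tuple X) A : \tr (state_n N xs A) = \tr A.
Proof.
elim: n xs A => [|n IH] xs A.
  by rewrite /state_n sum_tuple0 (tuple0 xs).
rewrite [xs]tuple_eta.
have -> : [tuple of thead xs :: behead xs] = [tuple of [tuple thead xs] ++ behead_tuple xs] :> (1 + n).-tuple X.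
  by apply: val_inj.
rewrite (state_cat [tuple thead xs] (behead_tuple xs)) IH.
rewrite /state_n sum_tuple1.
have := hN.2 (thead xs) A; rewrite /=.
by move=> <-; congr (\tr _); apply: eq_bigr.
Qed.

End Evol.

End Part2.

Section Part3.
Set Implicit Arguments.
Unset Strict Implicit.
Unset Printing Implicit Defensive.
Local Open Scope ring_scope.

Section Classical.
Variable R : realType.

Lemma mi_formula (A B : finType) (q : A -> R) (w : A -> B -> R) :
  (forall a, 0 <= q a) -> (forall a b, 0 <= w a b) -> (forall a, \sum_b w a b = 1) ->
  mutual_info (fun a b => q a * w a b) =
  \sum_a q a * \sum_b phi (w a b) - \sum_b phi (\sum_a q a * w a b).
Proof.
move=> q0 w0 w1; rewrite /mutual_info.
have key a b : (if q a * w a b == 0 then 0 else q a * w a b *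
    ln (q a * w a b / ((\sum_b' q a * w a b') * (\sum_a' q a' * w a' b)))) =
    q a * phi (w a b) - q a * w a b * ln (\sum_a' q a' * w a' b).
  rewrite -mulr_sumr w1 mulr1.
  case: eqP => h.
    by rewrite /phi mulrA h !mul0r subrr.
  have qa : 0 < q a.
    by rewrite lt_neqAle q0 andbT; apply/eqP => e; apply: h; rewrite -e mul0r.
  have wab : 0 < w a b.
    by rewrite lt_neqAle w0 andbT; apply/eqP => e; apply: h; rewrite -e mulr0.
  have py : 0 < \sum_a' q a' * w a' b.
    rewrite (bigD1 a) //= ltr_pwDl ?mulr_gt0 //.
    by apply: sumr_ge0 => i _; apply: mulr_ge0.
  have -> : q a * w a b / (q a * \sum_a' q a' * w a' b) = w a b / \sum_a' q a' * w a' b.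
    by field; rewrite !gt_eqF.
  rewrite ln_div ?posrE // /phi; ring.
under eq_bigr => a _ do under eq_bigr => b _ do rewrite key.
rewrite /=.
under eq_bigr => a _ do rewrite sumrB -mulr_sumr.
rewrite sumrB; congr (_ - _).
rewrite exchange_big /=; apply: eq_bigr => b _.
by rewrite /phi mulr_suml.
Qed.

Lemma group_bound (S T : finType) (a : S -> T -> R) :
  (forall s t, 0 <= a s t) -> \sum_s \sum_t a s t = 1 -> (0 < #|S|)%N ->
  \sum_t phi (\sum_s a s t) - ln #|S|%:R <= \sum_s \sum_t phi (a s t) /\
  \sum_s \sum_t phi (a s t) <= \sum_t phi (\sum_s a s t).
Proof.
move=> a0 a1 S0; rewrite exchange_big /=; split.
  have -> : ln #|S|%:R = \sum_t (\sum_s a s t) * ln #|S|%:R.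
    by rewrite -mulr_suml -exchange_big /= a1 mul1r.
  rewrite -sumrB; apply: ler_sum => t _; exact: phi_sum_ge.
by apply: ler_sum => t _; apply: phi_sum_le.
Qed.

End Classical.

End Part3.

Section Part4.
Set Implicit Arguments.
Unset Strict Implicit.
Unset Printing Implicit Defensive.
Local Open Scope ring_scope.
Local Open Scope sesquilinear_scope.

Section Re.
Variable R : realType.
Lemma Re_sum (I : finType) (F : I -> R[i]) : complex.Re (\sum_i F i) = \sum_i complex.Re (F i).
Proof. by apply: big_morph; [exact: Re_add | by []]. Qed.
Lemma Re_B (x y : R[i]) : complex.Re (x - y) = complex.Re x - complex.Re y.
Proof. by case: x; case: y. Qed.
Lemma Re_ge0 (z : R[i]) : 0 <= z -> 0 <= complex.Re z.
Proof. by rewrite lecE => /andP[_]. Qed.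
Lemma tr_sum d (I : finType) (F : I -> 'M[R[i]]_d) : \tr (\sum_i F i) = \sum_i \tr (F i).
Proof. by apply: big_morph; [exact: mxtraceD | exact: mxtrace0]. Qed.
Lemma card_gt0_sum (I : finType) (f : I -> R) : \sum_i f i = 1 -> (0 < #|I|)%N.
Proof.
move=> h; rewrite lt0n; apply/negP => /eqP/card0_eq e.
by move: h; rewrite big_pred0 // => /eqP; rewrite eq_sym oner_eq0.
Qed.
End Re.

Section Main.
Variables (R : realType) (X Y : finType) (d : nat).
Local Notation C := R[i].
Variable N : X -> Y -> 'M[C]_d -> 'M[C]_d.
Variable Q : X -> R.
Hypothesis hN : ccqsc N.
Hypothesis hQ : pmf Q.

Definition Qn n (x : n.-tuple X) := \prod_(l < n) Q (tnth x l).
Definition Wf n (x : n.-tuple X) (y : n.-tuple Y) (A : 'M[C]_d) :=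
  complex.Re (\tr (evolve N x y A)).

Lemma Qn_ge0 n (x : n.-tuple X) : 0 <= Qn x.
Proof. by apply: prodr_ge0 => i _; apply: hQ.1. Qed.

Lemma Qn_cat k m (u : k.-tuple X) (v : m.-tuple X) : Qn [tuple of u ++ v] = Qn u * Qn v.
Proof.
rewrite /Qn big_split_ord; congr (_ * _); apply: eq_bigr => i _.
  by rewrite tnth_lshift.
by rewrite tnth_rshift.
Qed.


Lemma Qn_sum n : \sum_(x : n.-tuple X) Qn x = 1.
Proof.
elim: n => [|n IH]; first by rewrite sum_tuple0 /Qn big_ord0.
rewrite (@sum_tuple_cat _ _ 1 n) sum_tuple1 -hQ.2; apply: eq_bigr => x _.
transitivity (Qn [tuple x] * \sum_(v : n.-tuple X) Qn v); last by rewrite IH mulr1 /Qn big_ord1.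
rewrite mulr_sumr; apply: eq_bigr => v _.
rewrite /Qn big_ord_recl big_ord1; congr (_ * _); apply: eq_bigr => i _; by rewrite !(tnth_nth x).
Qed.

Lemma QQ_sum k m : \sum_(u : k.-tuple X) \sum_(v : m.-tuple X) Qn u * Qn v = 1.
Proof.
under eq_bigr => u _ do rewrite -mulr_sumr Qn_sum mulr1.
exact: Qn_sum.
Qed.

Lemma Wf_ge0 n (x : n.-tuple X) y A : psdmx A -> 0 <= Wf x y A.
Proof. by move=> hA; apply/Re_ge0/psd_tr; rewrite evolveE; apply: evol_psd. Qed.

Lemma Wf_sum n (x : n.-tuple X) A : \sum_y Wf x y A = complex.Re (\tr A).
Proof. by rewrite /Wf -Re_sum -tr_sum -(state_tr hN x A). Qed.

Lemma Wf_B n (x : n.-tuple X) y A B : Wf x y (A - B) = Wf x y A - Wf x y B.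
Proof. by rewrite /Wf evolveE evol_B // raddfB Re_B. Qed.

Lemma Wf_cat k m (u : k.-tuple X) (v : m.-tuple X) (s : k.-tuple Y) (t : m.-tuple Y) A :
  Wf [tuple of u ++ v] [tuple of s ++ t] A = Wf v t (evolve N u s A).
Proof. by rewrite /Wf evolve_cat. Qed.

Lemma Wf_state k m (u : k.-tuple X) (v : m.-tuple X) t A :
  \sum_(s : k.-tuple Y) Wf v t (evolve N u s A) = Wf v t (state_n N u A).
Proof. by rewrite /Wf -Re_sum -tr_sum /state_n evolveE evol_sum. Qed.

Lemma density_Re (rho : 'M[C]_d) : density rho -> complex.Re (\tr rho) = 1.
Proof. by case=> _ ->. Qed.

Lemma herm_B (A B : 'M[C]_d) : A^t* = A -> B^t* = B -> (A - B)^t* = A - B.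
Proof.
move=> hA hB; apply/matrixP => i j; move/matrixP: hA => /(_ i j); move/matrixP: hB => /(_ i j).
by rewrite !mxE rmorphB /= => -> ->.
Qed.

Lemma tv_bound m (v : m.-tuple X) (A B : 'M[C]_d) eps :
  psdmx A -> psdmx B -> trace_dist (A - B) < eps ->
  \sum_t `|Wf v t A - Wf v t B| <= eps *+ 2.
Proof.
move=> hA hB ht.
have [P [M [hP hM E ht2]]] := trace_decomp (herm_B (psd_herm hA) (psd_herm hB)).
have : \sum_t `|Wf v t A - Wf v t B| <= \sum_t (Wf v t P + Wf v t M).
  apply: ler_sum => t _; rewrite -Wf_B E Wf_B.
  apply: le_trans (ler_normB _ _) _.
  by rewrite !ger0_norm ?Wf_ge0.
rewrite big_split /= !Wf_sum ht2 => h.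
apply: le_trans h _; rewrite mulr2n; lra.
Qed.

Section Split.
Variables k m : nat.

Definition Fv (v : m.-tuple X) (sig : 'M[C]_d) := \sum_(t : m.-tuple Y) phi (Wf v t sig).
Definition Ap rho := \sum_(u : k.-tuple X) \sum_(v : m.-tuple X)
  Qn u * Qn v * Fv v (state_n N u rho).
Definition Gt rho (t : m.-tuple Y) := \sum_(u : k.-tuple X) \sum_(v : m.-tuple X)
  Qn u * Qn v * Wf v t (state_n N u rho).
Definition Bp rho := \sum_t phi (Gt rho t).
Definition Aq rho := \sum_(x : (k + m).-tuple X) Qn x * \sum_y phi (Wf x y rho).
Definition Bq rho := \sum_(y : (k + m).-tuple Y) phi (\sum_x Qn x * Wf x y rho).
Definition lnK := ln (#|{: k.-tuple Y}|%:R : R).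
Definition lnKm := ln (#|{: m.-tuple Y}|%:R : R).

Lemma MI_split rho : density rho ->
  mutual_info (@joint_pmf R X Y d N Q rho (k + m)) = Aq rho - Bq rho.
Proof.
move=> hr.
transitivity (mutual_info (fun (x : (k + m).-tuple X) y => Qn x * Wf x y rho)); first by [].
rewrite mi_formula //.
- exact: Qn_ge0.
- by move=> x y; apply: Wf_ge0; case: hr.
- by move=> x; rewrite Wf_sum density_Re.
Qed.

Lemma st_sum (u : k.-tuple X) (v : m.-tuple X) rho : density rho ->
  \sum_t Wf v t (state_n N u rho) = 1.
Proof. by move=> hr; rewrite Wf_sum state_tr // density_Re. Qed.

Lemma st_ge0 (u : k.-tuple X) (v : m.-tuple X) t rho : density rho ->
  0 <= Wf v t (state_n N u rho).
Proof. by move=> hr; apply: Wf_ge0; apply: state_psd => //; case: hr. Qed.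

Lemma ev_ge0 (u : k.-tuple X) (s : k.-tuple Y) (v : m.-tuple X) t rho : density rho ->
  0 <= Wf v t (evolve N u s rho).
Proof. by move=> hr; apply: Wf_ge0; rewrite evolveE; apply: evol_psd => //; case: hr. Qed.

Lemma A_bounds rho : density rho -> Ap rho - lnK <= Aq rho /\ Aq rho <= Ap rho.
Proof.
move=> hr.
have hA : Aq rho = \sum_(u : k.-tuple X) \sum_(v : m.-tuple X) Qn u * Qn v *
    \sum_(s : k.-tuple Y) \sum_(t : m.-tuple Y) phi (Wf v t (evolve N u s rho)).
  rewrite /Aq sum_tuple_cat; apply: eq_bigr => u _; apply: eq_bigr => v _.
  rewrite Qn_cat sum_tuple_cat; congr (_ * _); apply: eq_bigr => s _; apply: eq_bigr => t _.
  by rewrite Wf_cat.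
have gb u v := @group_bound R _ _ (fun s t => Wf v t (evolve N u s rho))
   (fun s t => ev_ge0 u s v t hr).
have tot u v : \sum_(s : k.-tuple Y) \sum_(t : m.-tuple Y) Wf v t (evolve N u s rho) = 1.
  by rewrite exchange_big /=; under eq_bigr => t _ do rewrite Wf_state; exact: st_sum.
have hb u v : Fv v (state_n N u rho) - lnK <=
    \sum_(s : k.-tuple Y) \sum_(t : m.-tuple Y) phi (Wf v t (evolve N u s rho)) /\
    \sum_(s : k.-tuple Y) \sum_(t : m.-tuple Y) phi (Wf v t (evolve N u s rho)) <=
    Fv v (state_n N u rho).
  have [] := gb u v (tot u v) (card_gt0_sum (tot u v)).
  by rewrite /Fv; under eq_bigr => t _ do rewrite Wf_state.
rewrite hA; split.
  have -> : Ap rho - lnK = \sum_(u : k.-tuple X) \sum_(v : m.-tuple X) Qn u * Qn v *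
      (Fv v (state_n N u rho) - lnK).
    under eq_bigr => u _ do under eq_bigr => v _ do rewrite mulrBr.
    rewrite /Ap; under eq_bigr => u _ do rewrite sumrB.
    rewrite sumrB; congr (_ - _); under eq_bigr => u _ do rewrite -mulr_suml.
    by rewrite -mulr_suml QQ_sum mul1r.
  apply: ler_sum => u _; apply: ler_sum => v _; apply: ler_wpM2l.
    by apply: mulr_ge0; apply: Qn_ge0.
  exact: (hb u v).1.
apply: ler_sum => u _; apply: ler_sum => v _; apply: ler_wpM2l.
  by apply: mulr_ge0; apply: Qn_ge0.
exact: (hb u v).2.
Qed.


Lemma Gt_ge0 rho t : density rho -> 0 <= Gt rho t.
Proof.
move=> hr; apply: sumr_ge0 => u _; apply: sumr_ge0 => v _.
by apply: mulr_ge0; [apply: mulr_ge0; apply: Qn_ge0 | apply: st_ge0].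
Qed.

Lemma Gt_sum rho : density rho -> \sum_t Gt rho t = 1.
Proof.
move=> hr; rewrite /Gt exchange_big /=.
rewrite -[RHS](QQ_sum k m); apply: eq_bigr => u _.
rewrite exchange_big /=; apply: eq_bigr => v _.
by rewrite -mulr_sumr st_sum // mulr1.
Qed.

Lemma B_bounds rho : density rho -> Bp rho - lnK <= Bq rho /\ Bq rho <= Bp rho.
Proof.
move=> hr.
pose b (s : k.-tuple Y) (t : m.-tuple Y) := \sum_(u : k.-tuple X) \sum_(v : m.-tuple X)
    Qn u * Qn v * Wf v t (evolve N u s rho).
have hB : Bq rho = \sum_s \sum_t phi (b s t).
  rewrite /Bq sum_tuple_cat; apply: eq_bigr => s _; apply: eq_bigr => t _.
  congr phi; rewrite sum_tuple_cat; apply: eq_bigr => u _; apply: eq_bigr => v _.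
  by rewrite Qn_cat Wf_cat.
have b0 s t : 0 <= b s t.
  apply: sumr_ge0 => u _; apply: sumr_ge0 => v _.
  by apply: mulr_ge0; [apply: mulr_ge0; apply: Qn_ge0 | apply: ev_ge0].
have bs t : \sum_s b s t = Gt rho t.
  rewrite /b exchange_big /=; apply: eq_bigr => u _.
  rewrite exchange_big /=; apply: eq_bigr => v _.
  by rewrite -mulr_sumr Wf_state.
have tot : \sum_s \sum_t b s t = 1.
  by rewrite exchange_big /=; under eq_bigr => t _ do rewrite bs; exact: Gt_sum.
have [h1 h2] := group_bound b0 tot (card_gt0_sum tot).
by move: h1 h2; under eq_bigr => t _ do rewrite bs; rewrite -hB.
Qed.

Lemma A_cont r1 r2 eps : density r1 -> density r2 ->
  (forall (u : k.-tuple X) (v : m.-tuple X),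
     \sum_t `|Wf v t (state_n N u r1) - Wf v t (state_n N u r2)| <= eps *+ 2) ->
  Ap r2 - Ap r1 <= 2 + eps * lnKm.
Proof.
move=> h1 h2 H.
rewrite /Ap -sumrB.
apply: le_trans (_ : \sum_(u : k.-tuple X) \sum_(v : m.-tuple X) Qn u * Qn v * (2 + eps * lnKm) <= _).
  apply: ler_sum => u _; rewrite -sumrB; apply: ler_sum => v _.
  rewrite -mulrBr; apply: ler_wpM2l; first by apply: mulr_ge0; apply: Qn_ge0.
  rewrite /Fv /lnKm; apply: phi_cont.
  - by move=> t; apply: st_ge0.
  - by move=> t; apply: st_ge0.
  - exact: st_sum.
  - exact: st_sum.
  - exact: (card_gt0_sum (st_sum u v h1)).
  - exact: H.
under eq_bigr => u _ do rewrite -mulr_suml.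
by rewrite -mulr_suml QQ_sum mul1r.
Qed.

Lemma B_cont r1 r2 eps : density r1 -> density r2 ->
  (forall (u : k.-tuple X) (v : m.-tuple X),
     \sum_t `|Wf v t (state_n N u r1) - Wf v t (state_n N u r2)| <= eps *+ 2) ->
  Bp r2 - Bp r1 <= 2 + eps * lnKm.
Proof.
move=> h1 h2 H.
rewrite /Bp /lnKm; apply: phi_cont.
- by move=> t; apply: Gt_ge0.
- by move=> t; apply: Gt_ge0.
- exact: Gt_sum.
- exact: Gt_sum.
- exact: (card_gt0_sum (Gt_sum h1)).
have e t : Gt r1 t - Gt r2 t = \sum_(u : k.-tuple X) \sum_(v : m.-tuple X)
    Qn u * Qn v * (Wf v t (state_n N u r1) - Wf v t (state_n N u r2)).
  rewrite /Gt -sumrB; apply: eq_bigr => u _; rewrite -sumrB; apply: eq_bigr => v _.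
  by rewrite mulrBr.
apply: le_trans (_ : \sum_t \sum_(u : k.-tuple X) \sum_(v : m.-tuple X)
    Qn u * Qn v * `|Wf v t (state_n N u r1) - Wf v t (state_n N u r2)| <= _).
  apply: ler_sum => t _; rewrite e.
  apply: le_trans (ler_norm_sum _ _ _) _; apply: ler_sum => u _.
  apply: le_trans (ler_norm_sum _ _ _) _; apply: ler_sum => v _.
  by rewrite normrM ger0_norm // mulr_ge0 // Qn_ge0.
rewrite exchange_big /=.
apply: le_trans (_ : \sum_(u : k.-tuple X) \sum_(v : m.-tuple X) Qn u * Qn v * (eps *+ 2) <= _).
  apply: ler_sum => u _; rewrite exchange_big /=; apply: ler_sum => v _.
  rewrite -mulr_sumr; apply: ler_wpM2l; first by apply: mulr_ge0; apply: Qn_ge0.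
  exact: H.
under eq_bigr => u _ do rewrite -mulr_suml.
by rewrite -mulr_suml QQ_sum mul1r.
Qed.

Lemma MI_bound a b eps : density a -> density b ->
  (forall u : k.-tuple X, trace_dist (state_n N u a - state_n N u b) < eps) ->
  `| mutual_info (@joint_pmf R X Y d N Q a (k + m)) -
     mutual_info (@joint_pmf R X Y d N Q b (k + m)) | <= (lnK + 2 + eps * lnKm) *+ 2.
Proof.
move=> ha hb H.
have T1 (u : k.-tuple X) (v : m.-tuple X) : \sum_t `|Wf v t (state_n N u a) - Wf v t (state_n N u b)| <= eps *+ 2.
  exact: (tv_bound v (state_psd hN u ha.1) (state_psd hN u hb.1) (H u)).
have T2 (u : k.-tuple X) (v : m.-tuple X) : \sum_t `|Wf v t (state_n N u b) - Wf v t (state_n N u a)| <= eps *+ 2.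
  by under eq_bigr => t _ do rewrite distrC; exact: T1.
have [a1 a2] := A_bounds ha.
have [a3 a4] := A_bounds hb.
have [b1 b2] := B_bounds ha.
have [b3 b4] := B_bounds hb.
have c1 := A_cont ha hb T1.
have c2 := A_cont hb ha T2.
have c3 := B_cont ha hb T1.
have c4 := B_cont hb ha T2.
rewrite (MI_split ha) (MI_split hb) ler_norml; apply/andP; split; rewrite mulr2n; lra.
Qed.
End Split.
End Main.

End Part4.

Section Part5.
Set Implicit Arguments.
Unset Strict Implicit.
Unset Printing Implicit Defensive.
Local Open Scope ring_scope.
Section Final.
Variables (R : realType) (X Y : finType) (d : nat).
Variable N : X -> Y -> 'M[R[i]]_d -> 'M[R[i]]_d.
Variable Q : X -> R.
Hypothesis hN : ccqsc N.
Hypothesis hQ : pmf Q.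

Lemma Ypos (a : 'M[R[i]]_d) : density a -> (0 < #|Y|)%N.
Proof.
move=> ha; have := card_gt0_sum (Gt_sum hN hQ 0 1 ha).
by rewrite card_tuple expn1.
Qed.

Lemma lnK_eq (a : 'M[R[i]]_d) k : density a -> @lnK R Y k = k%:R * ln (#|Y|%:R : R) :> R.
Proof.
move=> ha; rewrite /lnK card_tuple natrX lnXn ?ltr0n ?(Ypos ha) //.
by rewrite mulr_natl.
Qed.

Lemma lnKm_eq (a : 'M[R[i]]_d) k : density a -> @lnKm R Y k = k%:R * ln (#|Y|%:R : R) :> R.
Proof. exact: lnK_eq. Qed.

Lemma In_bound (a b : 'M[R[i]]_d) (eps : R) k m : density a -> density b -> 0 <= eps -> (0 < k + m)%N ->
  (forall u : k.-tuple X, trace_dist (state_n N u a - state_n N u b) < eps) ->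
  `| In N Q a (k + m) - In N Q b (k + m) | <=
     (k%:R * ln (#|Y|%:R : R) + 2) *+ 2 / (k + m)%:R + (eps * ln (#|Y|%:R : R)) *+ 2.
Proof.
move=> ha hb e0 n0 H.
have L0 : 0 <= ln (#|Y|%:R : R) by rewrite ln_ge0 // ler1n (Ypos ha).
have hM := MI_bound hN hQ m ha hb H.
rewrite (lnK_eq k ha) (lnKm_eq m ha) in hM.
set L := ln (#|Y|%:R : R) in hM L0 *.
set D := mutual_info _ - mutual_info _ in hM.
have np : 0 < (k + m)%:R :> R by rewrite ltr0n.
have -> : In N Q a (k + m) - In N Q b (k + m) = (k + m)%:R^-1 * D.
  by rewrite /In /D mulrBr.
rewrite normrM (ger0_norm (_ : 0 <= (k + m)%:R^-1)); last by rewrite invr_ge0 ltW.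
have hm : (m%:R : R) <= (k + m)%:R by rewrite ler_nat leq_addl.
have h1 : (k + m)%:R^-1 * `|D| <= (k + m)%:R^-1 * ((k%:R * L + 2 + eps * (m%:R * L)) *+ 2).
  by rewrite ler_wpM2l // invr_ge0 ltW.
apply: (le_trans h1).
have key : (k + m)%:R^-1 * (eps * (m%:R * L)) <= eps * L.
  rewrite ler_pdivrMl // mulrCA; apply: ler_wpM2r => //; exact: mulr_ge0.
have -> : (k + m)%:R^-1 * ((k%:R * L + 2 + eps * (m%:R * L)) *+ 2) =
   (k%:R * L + 2) *+ 2 / (k + m)%:R + ((k + m)%:R^-1 * (eps * (m%:R * L))) *+ 2.
  by rewrite !mulr2n; ring.
by apply: lerD => //; rewrite !mulr2n; apply: lerD.
Qed.

End Final.


End Part5.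

Unset Implicit Arguments.
Set Strict Implicit.

Theorem theorem1 (R : realType) (X Y : finType) (d : nat)
  (N : X -> Y -> 'M[R[i]]_d -> 'M[R[i]]_d) (Q : X -> R)
  (alpha beta : 'M[R[i]]_d) :
  ccqsc N -> indecomposable N -> pmf Q ->
  density alpha -> density beta ->
  (fun n : nat => In N Q alpha n - In N Q beta n) @ \oo --> (0 : R).
Proof.
move=> hN hI hQ ha hb.
apply/cvgrPdist_lt => e e0.
set L := ln (#|Y|%:R : R).
have L0 : 0 <= L by rewrite ln_ge0 // ler1n (Ypos hN hQ ha).
set eps := e / (4%:R * (L + 1)).
have L1 : 0 < L + 1 by lra.
have eps0 : 0 < eps by rewrite divr_gt0 // mulr_gt0 // ltr0n.
have [N0 hN0] := hI alpha beta ha hb eps eps0.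
set P := (N0%:R * L + 2) *+ 2.
have P0 : 0 <= P by rewrite /P mulrn_wge0 // addr_ge0 // mulr_ge0.
near=> n.
have hn : (N0 < n)%N by near: n; exact: nbhs_infty_gt.
have hc : P * 2 / e < n%:R by near: n; exact: nbhs_infty_gtr.
have en : n = (N0 + (n - N0))%N by rewrite subnKC // ltnW.
have np : (0 < N0 + (n - N0))%N by rewrite -en (leq_ltn_trans _ hn).
have B := In_bound hN hQ ha hb (ltW eps0) np (fun u => hN0 N0 (leqnn N0) u).
rewrite -en in B.
rewrite sub0r normrN; apply: (le_lt_trans B).
have n0 : 0 < n%:R :> R by rewrite ltr0n (leq_ltn_trans _ hn).
have h1 : P / n%:R < e / 2.
  rewrite ltr_pdivrMr //; move: hc; rewrite ltr_pdivrMr // => hc.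
  have -> : e / 2 * n%:R = (n%:R * e) / 2 by field.
  by rewrite ltr_pdivlMr.
have h2 : eps * L *+ 2 < e / 2.
  have -> : eps * L *+ 2 = e / 2 * (L / (L + 1)).
    rewrite /eps mulr2n; field; rewrite gt_eqF //.
  have q : L / (L + 1) < 1 by rewrite ltr_pdivrMr // mul1r; lra.
  by rewrite -[X in _ < X]mulr1 ltr_pM2l // divr_gt0.
rewrite -/P -/L; lra.
Unshelve. all: by end_near.
Qed.
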